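(* Let $\mathcal{A}=\mathcal{R}*_K\mathcal{S}*_L\mathcal{T}\in\mathbb{C}^{I_1\times\cdots\times I_N\times J_1\times\cdots\times J_M}$, where $\mathcal{R}\in\mathbb{C}^{I_1\times\cdots\times I_N\times H_1\times\cdots\times H_K}$, $\mathcal{S}\in\mathbb{C}^{H_1\times\cdots\times H_K\times G_1\times\cdots\times G_L}$ and $\mathcal{T}\in\mathbb{C}^{G_1\times\cdots\times G_L\times J_1\times\cdots\times J_M}$. Then $$\mathcal{A}_{\pi\dagger}=\mathcal{T}^{\dagger}*_L(\mathcal{A}*_M\mathcal{T}^{\dagger})^{\dagger}*_N\mathcal{A}*_M(\mathcal{R}^{\dagger}*_N\mathcal{A})^{\dagger}*_K\mathcal{R}^{\dagger},$$ and $\mathcal{A}_{\pi\dagger}$ is the unique tensor $\mathcal{X}\in\mathbb{C}^{J_1\times\cdots\times J_M\times I_1\times\cdots\times I_N}$ such that $\mathcal{X}*_N\mathcal{A}*_M\mathcal{X}=\mathcal{X}$, $\mathcal{A}*_M\mathcal{X}=\mathcal{A}*_M(\mathcal{R}^{\dagger}*_N\mathcal{A})^{\dagger}*_K\mathcal{R}^{\dagger}$ and $\mathcal{X}*_N\mathcal{A}=\mathcal{T}^{\dagger}*_L(\mathcal{A}*_M\mathcal{T}^{\dagger})^{\dagger}*_N\mathcal{A}$.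
   Context: $\mathbb{C}^{I_1\times\cdots\times I_N}$ denotes the set of complex tensors of order $N$ and dimension $I_1\times\cdots\times I_N$. For $\mathcal{A}\in\mathbb{C}^{I_1\times\cdots\times I_N\times K_1\times\cdots\times K_N}$ and $\mathcal{B}\in\mathbb{C}^{K_1\times\cdots\times K_N\times J_1\times\cdots\times J_M}$, the Einstein product $\mathcal{A}*_N\mathcal{B}$ is defined by $(\mathcal{A}*_N\mathcal{B})_{i_1\dots i_N j_1\dots j_M}=\sum_{k_1,\dots,k_N}a_{i_1\dots i_N k_1\dots k_N}b_{k_1\dots k_N j_1\dots j_M}$; it is associative. $\mathcal{A}^H$ denotes the conjugate transpose (swap the two groups of indices and conjugate entries). For $\mathcal{A}\in\mathbb{C}^{I_1\times\cdots\times I_N\times J_1\times\cdots\times J_M}$ the Moore–Penrose inverse $\mathcal{A}^{\dagger}$ is the unique $\mathcal{X}\in\mathbb{C}^{J_1\times\cdots\times J_M\times I_1\times\cdots\times I_N}$ with $\mathcal{A}*_M\mathcal{X}*_N\mathcal{A}=\mathcal{A}$, $\mathcal{X}*_N\mathcal{A}*_M\mathcal{X}=\mathcal{X}$, $(\mathcal{A}*_M\mathcal{X})^H=\mathcal{A}*_M\mathcal{X}$, $(\mathcal{X}*_N\mathcal{A})^H=\mathcal{X}*_N\mathcal{A}$. Given the factorization $\mathcal{A}=\mathcal{R}*_K\mathcal{S}*_L\mathcal{T}$ as in the claim, the product Moore–Penrose inverse of $\mathcal{A}$ (relative to this factorization) is $\mathcal{A}_{\pi\dagger}=\mathcal{T}^{\dagger}*_L(\mathcal{R}^{\dagger}*_N\mathcal{A}*_M\mathcal{T}^{\dagger})^{\dagger}*_K\mathcal{R}^{\dagger}$.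 *)

(* Defs.v *)
From HB Require Import structures.
From mathcomp Require Import all_boot all_order all_algebra.
From mathcomp Require Import complex.
From mathcomp Require Import reals.
From Stdlib Require Import ClassicalEpsilon.
Set Implicit Arguments. Unset Strict Implicit. Unset Printing Implicit Defensive.
Import Order.TTheory GRing.Theory Num.Theory.
Local Open Scope ring_scope.

Definition mindex (n : nat) (d : 'I_n -> nat) : finType :=
  {dffun forall k : 'I_n, 'I_(d k)}.

Definition tensor (C : Type) (N : nat) (I : 'I_N -> nat) (M : nat) (J : 'I_M -> nat) :=
  {ffun mindex I * mindex J -> C}.

Section Tensors.
Variable R : realType.
Local Notation C := R[i].

Definition einstein N (I : 'I_N -> nat) K (H : 'I_K -> nat) M (J : 'I_M -> nat)
  (A : tensor C I H) (B : tensor C H J) : tensor C I J :=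
  [ffun ij => \sum_(h : mindex H) A (ij.1, h) * B (h, ij.2)].

Definition ctr N (I : 'I_N -> nat) M (J : 'I_M -> nat) (A : tensor C I J) : tensor C J I :=
  [ffun ji => (A (ji.2, ji.1))^*].

Definition is_MP N (I : 'I_N -> nat) M (J : 'I_M -> nat)
  (A : tensor C I J) (X : tensor C J I) : Prop :=
  [/\ einstein (einstein A X) A = A,
      einstein (einstein X A) X = X,
      ctr (einstein A X) = einstein A X
    & ctr (einstein X A) = einstein X A].

Definition mpinv N (I : 'I_N -> nat) M (J : 'I_M -> nat) (A : tensor C I J) : tensor C J I :=
  epsilon (inhabits 0) (is_MP A).

Definition pmpinv N (I : 'I_N -> nat) M (J : 'I_M -> nat)
  K (H : 'I_K -> nat) L (G : 'I_L -> nat)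
  (Rt : tensor C I H) (A : tensor C I J) (T : tensor C G J) : tensor C J I :=
  einstein (einstein (mpinv T) (mpinv (einstein (einstein (mpinv Rt) A) (mpinv T))))
           (mpinv Rt).

End Tensors.

(* Main.v *)
Require Import Defs.
From HB Require Import structures.
From mathcomp Require Import all_boot all_order all_algebra.
From mathcomp Require Import complex.
From mathcomp Require Import reals.
From Stdlib Require Import ClassicalEpsilon.
Set Implicit Arguments. Unset Strict Implicit. Unset Printing Implicit Defensive.
Import Order.TTheory GRing.Theory Num.Theory.
Local Open Scope ring_scope.

Local Notation "A ** B" := (einstein A B) (at level 40, left associativity).
Local Notation "A ^H" := (ctr A) (at level 8).

Lemma einA (R : realType) N (I : 'I_N -> nat) K (H : 'I_K -> nat)
  L (G : 'I_L -> nat) M (J : 'I_M -> nat)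
  (A : tensor R[i] I H) (B : tensor R[i] H G) (C : tensor R[i] G J) :
  A ** B ** C = A ** (B ** C).
Proof.
apply/ffunP => -[x y]; rewrite !ffunE /=.
under eq_bigr do rewrite ffunE /= mulr_suml.
under [RHS]eq_bigr do rewrite ffunE /= mulr_sumr.
rewrite exchange_big /=; apply: eq_bigr => h _; apply: eq_bigr => g _.
by rewrite mulrA.
Qed.

Lemma ctrK (R : realType) N (I : 'I_N -> nat) M (J : 'I_M -> nat)
  (A : tensor R[i] I J) : A^H^H = A.
Proof. by apply/ffunP => -[x y]; rewrite !ffunE /= conjCK. Qed.

Lemma ctr_ein (R : realType) N (I : 'I_N -> nat) K (H : 'I_K -> nat)
  M (J : 'I_M -> nat) (A : tensor R[i] I H) (B : tensor R[i] H J) :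
  (A ** B)^H = B^H ** A^H.
Proof.
apply/ffunP => -[x y]; rewrite !ffunE /= rmorph_sum; apply: eq_bigr => h _.
by rewrite !ffunE /= rmorphM mulrC.
Qed.

Lemma einBr (R : realType) N (I : 'I_N -> nat) K (H : 'I_K -> nat)
  M (J : 'I_M -> nat) (A : tensor R[i] I H) (B C : tensor R[i] H J) :
  A ** (B - C) = A ** B - A ** C.
Proof.
apply/ffunP => -[x y]; rewrite !ffunE /= -sumrB; apply: eq_bigr => h _.
by rewrite !ffunE mulrBr.
Qed.

Lemma ein0r (R : realType) N (I : 'I_N -> nat) K (H : 'I_K -> nat)
  M (J : 'I_M -> nat) (A : tensor R[i] I H) :
  A ** (0 : tensor R[i] H J) = 0.
Proof.
apply/ffunP => -[x y]; rewrite !ffunE /=; apply: big1 => h _.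
by rewrite !ffunE mulr0.
Qed.

Lemma ctrB (R : realType) N (I : 'I_N -> nat) M (J : 'I_M -> nat)
  (A B : tensor R[i] I J) : (A - B)^H = A^H - B^H.
Proof. by apply/ffunP => -[x y]; rewrite !ffunE /= rmorphB. Qed.

Lemma self0 (R : realType) N (I : 'I_N -> nat) M (J : 'I_M -> nat)
  (B : tensor R[i] I J) : B^H ** B = 0 -> B = 0.
Proof.
move=> h0; apply/ffunP => -[x y].
have := congr1 (fun F : tensor R[i] J J => F (y, y)) h0; rewrite !ffunE /= => hs.
have := @psumr_eq0P _ _ predT (fun i => B (i, y) * (B (i, y))^*).
move=> /(_ (fun i _ => mul_conjC_ge0 _)) hh.
have : B (x, y) * (B (x, y))^* = 0.
  apply: hh => //; rewrite -[RHS]hs; apply: eq_bigr => i _.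
  by rewrite ffunE mulrC.
move/eqP; rewrite mul_conjC_eq0 => /eqP ->.
by rewrite ?ffunE.
Qed.

Lemma einBl (R : realType) N (I : 'I_N -> nat) K (H : 'I_K -> nat)
  M (J : 'I_M -> nat) (A B : tensor R[i] I H) (C : tensor R[i] H J) :
  (A - B) ** C = A ** C - B ** C.
Proof.
apply/ffunP => -[x y]; rewrite !ffunE /= -sumrB; apply: eq_bigr => h _.
by rewrite !ffunE mulrBl.
Qed.

Lemma canc_l (R : realType) N (I : 'I_N -> nat) K (H : 'I_K -> nat)
  M (J : 'I_M -> nat) (A : tensor R[i] I H) (U V : tensor R[i] H J) :
  A^H ** A ** U = A^H ** A ** V -> A ** U = A ** V.
Proof.
move=> e; apply/eqP; rewrite -subr_eq0; apply/eqP; apply: self0.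
rewrite -einBr ctr_ein einA -(einA A^H) einBr e subrr.
by rewrite ?ein0r.
Qed.

Lemma canc0 (R : realType) N (I : 'I_N -> nat) M (J : 'I_M -> nat)
  (A : tensor R[i] I J) (W : tensor R[i] J J) :
  A^H ** (A ** W - A) = 0 -> A ** W = A.
Proof.
move=> e; apply/eqP; rewrite -subr_eq0; apply/eqP; apply: self0.
by rewrite ctrB ctr_ein einBl einA e !ein0r subrr.
Qed.

Definition tmx (R : realType) N (I : 'I_N -> nat) M (J : 'I_M -> nat)
  (A : tensor R[i] I J) : 'M[R[i]]_(#|mindex I|, #|mindex J|) :=
  \matrix_(x, y) A (enum_val x, enum_val y).

Definition mxt (R : realType) N (I : 'I_N -> nat) M (J : 'I_M -> nat)
  (B : 'M[R[i]]_(#|mindex I|, #|mindex J|)) : tensor R[i] I J :=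
  [ffun xy => B (enum_rank xy.1) (enum_rank xy.2)].

Lemma tmxK (R : realType) N (I : 'I_N -> nat) M (J : 'I_M -> nat) :
  cancel (@tmx R N I M J) (@mxt R N I M J).
Proof. by move=> A; apply/ffunP => -[x y]; rewrite !ffunE mxE !enum_rankK. Qed.

Lemma mxtK (R : realType) N (I : 'I_N -> nat) M (J : 'I_M -> nat) :
  cancel (@mxt R N I M J) (@tmx R N I M J).
Proof. by move=> B; apply/matrixP => x y; rewrite mxE ffunE /= !enum_valK. Qed.

Lemma tmx_ein (R : realType) N (I : 'I_N -> nat) K (H : 'I_K -> nat)
  M (J : 'I_M -> nat) (A : tensor R[i] I H) (B : tensor R[i] H J) :
  tmx (A ** B) = tmx A *m tmx B.
Proof.
apply/matrixP => x y; rewrite !mxE ffunE /=.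
rewrite (reindex (@enum_val (mindex H) predT)) /=; last first.
  by apply: onW_bij; apply: enum_val_bij.
by apply: eq_bigr => h _; rewrite !mxE.
Qed.

Lemma ginv_ex (R : realType) N (I : 'I_N -> nat) M (J : 'I_M -> nat)
  (A : tensor R[i] I J) : exists Y : tensor R[i] J I, A ** Y ** A = A.
Proof.
exists (mxt (pinvmx (tmx A))); apply: (can_inj (@tmxK _ _ _ _ _)).
by rewrite !tmx_ein mxtK mulmxKpV.
Qed.

Lemma mp_ex (R : realType) N (I : 'I_N -> nat) M (J : 'I_M -> nat)
  (A : tensor R[i] I J) : exists X, is_MP A X.
Proof.
have [Y hY] := ginv_ex (A^H ** A ** A^H).
set X := A^H ** Y ** A^H.
have h1 : A^H ** A ** A^H ** Y ** A^H ** A = A^H ** A.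
  have h := canc_l (A:=A^H) (U := (A^H ** A ** A^H ** Y ** A^H)^H) (V := A).
  have e := congr1 (@ctr _ _ _ _ _) hY.
  rewrite !ctr_ein !ctrK !einA in e.
  have h' := congr1 (@ctr _ _ _ _ _) (h _).
  rewrite !ctr_ein !ctrK !einA in h'.
  rewrite !einA; apply: h'.
  exact: e.
have h2 : A ** X ** A = A.
  rewrite einA; apply: canc0; rewrite einBr.
  apply/eqP; rewrite subr_eq0; apply/eqP.
  by rewrite /X !einA; rewrite !einA in h1.
have XE : X = A^H ** Y ** A^H by [].
clearbody X.
have hA : A^H = A^H ** X^H ** A^H by rewrite -{1}h2 !ctr_ein !einA.
have hP : (A ** X)^H = A ** X.
  have e : A ** A^H ** Y ** A^H = A ** A^H ** Y ** A^H ** X^H ** A^H.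
    by rewrite {2}hA !einA.
  have e' : A ** X = A ** X ** (A ** X)^H.
    by rewrite ctr_ein {1 2}XE !einA; rewrite !einA in e; exact: e.
  by rewrite e' !ctr_ein !ctrK !einA.
have hQ : (X ** A)^H = X ** A.
  have e : A^H ** Y ** A^H ** A = A^H ** X^H ** A^H ** Y ** A^H ** A.
    by rewrite {1}hA.
  have e' : X ** A = (X ** A)^H ** (X ** A).
    by rewrite ctr_ein {1 3}XE !einA; rewrite !einA in e; exact: e.
  by rewrite e' !ctr_ein !ctrK !einA.
have hB : A^H ** (A ** X) = A^H.
  by rewrite -{1}hP -ctr_ein h2.
exists X; split => //.
rewrite XE !einA; rewrite XE !einA in hB.
by rewrite hB.
Qed.

Lemma mpP (R : realType) N (I : 'I_N -> nat) M (J : 'I_M -> nat)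
  (A : tensor R[i] I J) : is_MP A (mpinv A).
Proof. exact: (epsilon_spec (inhabits 0) (is_MP A) (mp_ex A)). Qed.

Lemma einl_eq (R : realType) N (I : 'I_N -> nat) K (H : 'I_K -> nat)
  M (J : 'I_M -> nat) (U V : tensor R[i] I H) (Z : tensor R[i] H J) :
  U = V -> U ** Z = V ** Z.
Proof. by move->. Qed.

Lemma projeq (R : realType) N (I : 'I_N -> nat) K (H : 'I_K -> nat)
  L (G : 'I_L -> nat)
  (B : tensor R[i] I H) (C : tensor R[i] I G) (u : tensor R[i] G H)
  (v : tensor R[i] H G) :
  B = C ** u -> C = B ** v -> C ** mpinv C = B ** mpinv B.
Proof.
move=> hB hC; subst B.
have [b1 _ b3 _] := mpP (C ** u); have [c1 _ c3 _] := mpP C.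
move: (mpinv (C ** u)) (mpinv C) b1 b3 c1 c3 => b c b1 b3 c1 c3.
have PQ : C ** c ** (C ** u ** b) = C ** u ** b.
  by rewrite -!einA c1.
have QP : C ** u ** b ** (C ** c) = C ** c.
  rewrite !einA {2}hC !einA.
  have b1c : forall Q (Qd : 'I_Q -> nat) (Z : tensor R[i] H Qd),
      C ** (u ** (b ** (C ** (u ** Z)))) = C ** (u ** Z).
    by move=> Q Qd Z; have := einl_eq Z b1; rewrite !einA.
  rewrite b1c.
  by rewrite -!einA -hC.
by rewrite -c3 -QP ctr_ein b3 c3 PQ.
Qed.

Lemma projeq' (R : realType) N (I : 'I_N -> nat) K (H : 'I_K -> nat)
  M (J : 'I_M -> nat)
  (B : tensor R[i] H J) (D : tensor R[i] I J) (u : tensor R[i] H I)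
  (v : tensor R[i] I H) :
  B = u ** D -> D = v ** B -> mpinv D ** D = mpinv B ** B.
Proof.
move=> hB hD; subst B.
have [b1 _ _ b4] := mpP (u ** D); have [d1 _ _ d4] := mpP D.
move: (mpinv (u ** D)) (mpinv D) b1 b4 d1 d4 => b d b1 b4 d1 d4.
have QP : b ** (u ** D) ** (d ** D) = b ** (u ** D).
  by rewrite !einA -(einA D) d1.
have PQ : d ** D ** (b ** (u ** D)) = d ** D.
  rewrite {1}hD !einA.
  have e : u ** (D ** (b ** (u ** D))) = u ** D.
    by rewrite !einA in b1.
  by rewrite e -hD.
by rewrite -d4 -PQ ctr_ein b4 d4 QP.
Qed.

Theorem theorem3p4 (R : realType)
  (N : nat) (I : 'I_N -> nat) (M : nat) (J : 'I_M -> nat)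
  (K : nat) (H : 'I_K -> nat) (L : nat) (G : 'I_L -> nat)
  (Rt : tensor R[i] I H) (S : tensor R[i] H G) (T : tensor R[i] G J) :
  let A := einstein (einstein Rt S) T in
  pmpinv Rt A T =
    einstein (einstein (einstein (einstein (mpinv T) (mpinv (einstein A (mpinv T)))) A)
                       (mpinv (einstein (mpinv Rt) A)))
             (mpinv Rt)
  /\ (forall X : tensor R[i] J I,
        [/\ einstein (einstein X A) X = X,
            einstein A X = einstein (einstein A (mpinv (einstein (mpinv Rt) A))) (mpinv Rt)
          & einstein X A = einstein (einstein (mpinv T) (mpinv (einstein A (mpinv T)))) A]
        <-> X = pmpinv Rt A T).
Proof.
move=> A.
have [r1 _ _ _] := mpP Rt.
have [t1 t2 _ _] := mpP T.
have f1 : Rt ** mpinv Rt ** A = A by rewrite /A -!einA r1.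
have f2 : A ** mpinv T ** T = A.
  by rewrite /A !einA -(einA T) t1.
clearbody A; rewrite /pmpinv.
move: (mpinv Rt) (mpinv T) f1 f2 t2 => r t f1 f2 t2.
have hPQ : r ** A ** mpinv (r ** A) = r ** A ** t ** mpinv (r ** A ** t).
  by apply: (projeq (u := t) (v := T)) => //; rewrite !einA -(einA A t) f2.
have hPQ' : mpinv (A ** t) ** (A ** t) = mpinv (r ** A ** t) ** (r ** A ** t).
  apply: (projeq' (u := r) (v := Rt)); first by rewrite einA.
  by rewrite -!einA f1.
have [_ b2 _ _] := mpP (r ** A ** t).
move: (mpinv (r ** A ** t)) (mpinv (r ** A)) (mpinv (A ** t)) hPQ hPQ' b2.
move=> b c d hPQ hPQ' b2.
have f1c : forall Q (Qd : 'I_Q -> nat) (Z : tensor R[i] J Qd),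
    Rt ** (r ** (A ** Z)) = A ** Z.
  by move=> Q Qd Z; have := einl_eq Z f1; rewrite !einA.
have f2n : A ** (t ** T) = A by rewrite -einA.
have b2c : forall Q (Qd : 'I_Q -> nat) (Z : tensor R[i] H Qd),
    b ** (r ** (A ** (t ** (b ** Z)))) = b ** Z.
  by move=> Q Qd Z; have := einl_eq Z b2; rewrite !einA.
have eP : A ** c ** r = A ** (t ** b ** r).
  have g := einl_eq r (congr1 (einstein Rt) hPQ).
  by rewrite !einA !f1c in g; rewrite !einA.
have eQ : t ** d ** A = t ** b ** r ** A.
  have g := einl_eq T (congr1 (einstein t) hPQ').
  by rewrite !einA !f2n in g; rewrite !einA.
have eQc : forall Q (Qd : 'I_Q -> nat) (Z : tensor R[i] J Qd),
    t ** (d ** (A ** Z)) = t ** (b ** (r ** (A ** Z))).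
  by move=> Q Qd Z; have := einl_eq Z eQ; rewrite !einA.
have eXAX : t ** b ** r ** A ** (t ** b ** r) = t ** b ** r.
  by rewrite !einA b2c.
split.
  have epn : A ** (c ** r) = A ** (t ** (b ** r)) by rewrite !einA in eP.
  by rewrite !einA eQc epn b2c.
move=> X; split.
  case=> hX1 hX2 hX3.
  by rewrite -hX1 einA hX2 eP -einA hX3 eQ.
move->; split.
- exact: eXAX.
- by rewrite eP.
- by rewrite eQ.
Qed.
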